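(* Let $\lambda$ be a regular uncountable cardinal and suppose $\square(\lambda,<\omega)$ holds. Then for every stationary $S\subseteq\lambda$, $\mathrm{Refl}(2,S)$ fails; that is, there are two stationary subsets of $S$ that do not reflect simultaneously.
   Context: For a set of ordinals $A$, $\mathrm{acc}(A)$ is the set of $\beta<\sup\{\alpha+1\mid\alpha\in A\}$ with $\beta=\sup(A\cap\beta)$. A coherent sequence of length $\lambda$ and width $<\eta$ is $\mathcal{C}=\langle\mathcal{C}_\alpha\mid\alpha<\lambda\rangle$ where each $\mathcal{C}_\alpha$ is a nonempty set of fewer than $\eta$ closed unbounded subsets of $\alpha$ (for successor $\alpha=\beta+1$, $\mathcal{C}_\alpha=\{\{\beta\}\}$), such that for all $\beta<\lambda$, $C\in\mathcal{C}_\beta$ and $\alpha\in\mathrm{acc}(C)$, $C\cap\alpha\in\mathcal{C}_\alpha$. A thread is a club $D\subseteq\lambda$ with $D\cap\alpha\in\mathcal{C}_\alpha$ for all $\alpha\in\mathrm{acc}(D)$. $\square(\lambda,<\eta)$ asserts the existence of a coherent sequence of length $\lambda$ and width $<\eta$ with no thread; so $\square(\lambda,<\omega)$ concerns sequences with each $\mathcal{C}_\alpha$ finite. A stationary $S\subseteq\lambda$ reflects at $\alpha<\lambda$ if $\mathrm{cf}(\alpha)>\omega$ and $S\cap\alpha$ is stationary in $\alpha$; a collection of stationary sets reflects simultaneously if there is one $\alpha<\lambda$ at which all of them reflect. $\mathrm{Refl}(<\kappa,S)$ says every collection of fewer than $\kappa$ stationary subsets of $S$ reflects simultaneously; $\mathrm{Refl}(\kappa,S)$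 means $\mathrm{Refl}(<\kappa^+,S)$. *)

(* Defs.v *)
(* The cardinal lambda is represented by a well-ordered type
   (L, lt): elements of L are the ordinals below lambda. Subsets are
   predicates L -> Prop. *)
From Stdlib Require Import List.
Import ListNotations.

Section SetTheory.
Context {L : Type} (lt : L -> L -> Prop).

Definition le (x y : L) : Prop := lt x y \/ x = y.

Definition wellorder : Prop :=
  (forall x, ~ lt x x) /\
  (forall x y z, lt x y -> lt y z -> lt x z) /\
  (forall x y, lt x y \/ x = y \/ lt y x) /\
  well_founded lt.

Definition is_sup_below (A : L -> Prop) (b : L) : Prop :=
  forall g, lt g b -> exists a, A a /\ lt g a /\ lt a b.

Definition acc (A : L -> Prop) (b : L) : Prop :=
  (exists a, A a /\ le b a) /\ is_sup_below A b.

Definition club_in (a : L) (C : L -> Prop) : Prop :=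
  (forall x, C x -> lt x a) /\
  (forall g, lt g a -> exists d, C d /\ le g d) /\
  (forall b, lt b a -> (exists c, C c /\ lt c b) -> is_sup_below C b -> C b).

Definition club (C : L -> Prop) : Prop :=
  (forall g, exists d, C d /\ le g d) /\
  (forall b, (exists c, C c /\ lt c b) -> is_sup_below C b -> C b).

Definition succ_of (b a : L) : Prop :=
  lt b a /\ forall g, ~ (lt b g /\ lt g a).

Definition mem_fam (l : list (L -> Prop)) (C : L -> Prop) (a : L) : Prop :=
  exists D, In D l /\ forall x, D x <-> (C x /\ lt x a).

(* A coherent sequence of length lambda and width < omega: each C_a is a
   finite (list-enumerated) nonempty set of clubs in a. *)
Definition coherent_fin (Cs : L -> list (L -> Prop)) : Prop :=
  (forall a, Cs a <> []) /\
  (forall a C, In C (Cs a) -> club_in a C) /\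
  (forall b a, succ_of b a -> forall C, In C (Cs a) -> forall x, C x <-> x = b) /\
  (forall b C, In C (Cs b) -> forall a, acc C a -> mem_fam (Cs a) C a).

Definition thread (Cs : L -> list (L -> Prop)) (D : L -> Prop) : Prop :=
  club D /\ forall a, acc D a -> mem_fam (Cs a) D a.

Definition square_fin : Prop :=
  exists Cs, coherent_fin Cs /\ ~ exists D, thread Cs D.

Definition cf_gt_omega (a : L) : Prop :=
  (exists g, lt g a) /\
  forall f : nat -> L, (forall n, lt (f n) a) ->
    exists g, lt g a /\ forall n, lt (f n) g.

Definition stationary_in (a : L) (S : L -> Prop) : Prop :=
  forall C, club_in a C -> exists x, C x /\ S x.

Definition stationary (S : L -> Prop) : Prop :=
  forall C, club C -> exists x, C x /\ S x.

Definition reflects_at (S : L -> Prop) (a : L) : Prop :=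
  cf_gt_omega a /\ stationary_in a (fun x => S x /\ lt x a).

(* lambda is regular: every unbounded subset has order type lambda *)
Definition regular : Prop :=
  forall X : L -> Prop, (forall g, exists x, X x /\ le g x) ->
    exists f : L -> L,
      (forall x y, lt x y -> lt (f x) (f y)) /\
      (forall x, X (f x)) /\
      (forall y, X y -> exists x, f x = y).

Definition uncountable : Prop :=
  ~ exists f : L -> nat, forall x y, f x = f y -> x = y.

End SetTheory.

(* Main.v *)
Require Import Defs.
From Stdlib Require Import List Classical ClassicalEpsilon Lia Arith.
Import ListNotations.

Lemma choice_fun {A B : Type} (R : A -> B -> Prop) :
  (forall x, exists y, R x y) -> exists f : A -> B, forall x, R x (f x).
Proof.
  intro H. exists (fun x => proj1_sig (constructive_indefinite_description _ (H x))).
  intro x. exact (proj2_sig (constructive_indefinite_description _ (H x))).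
Qed.

Fixpoint itr {A : Type} (F : A -> A) (x0 : A) (n : nat) : A :=
  match n with 0 => x0 | S m => F (itr F x0 m) end.

Section Main.
Variable L : Type.
Variable lt : L -> L -> Prop.
Hypothesis Hwo : wellorder lt.

Lemma irr : forall x, ~ lt x x. Proof. exact (proj1 Hwo). Qed.
Lemma trans : forall x y z, lt x y -> lt y z -> lt x z. Proof. exact (proj1 (proj2 Hwo)). Qed.
Lemma tri : forall x y, lt x y \/ x = y \/ lt y x. Proof. exact (proj1 (proj2 (proj2 Hwo))). Qed.
Lemma wf : well_founded lt. Proof. exact (proj2 (proj2 (proj2 Hwo))). Qed.

Lemma le_refl x : le lt x x. Proof. right; reflexivity. Qed.
Lemma not_lt_le x y : ~ lt x y -> le lt y x.
Proof. intro H. destruct (tri x y) as [h|[h|h]]; [contradiction| right; auto | left; auto]. Qed.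
Lemma not_le_lt x y : ~ le lt x y -> lt y x.
Proof. intro H. destruct (tri x y) as [h|[h|h]]; auto; exfalso; apply H; [left|right]; auto. Qed.
Lemma le_lt_trans x y z : le lt x y -> lt y z -> lt x z.
Proof. intros [h|h] h2; [eapply trans; eauto | subst; auto]. Qed.
Lemma lt_le_trans x y z : lt x y -> le lt y z -> lt x z.
Proof. intros h [h2|h2]; [eapply trans; eauto | subst; auto]. Qed.
Lemma le_trans x y z : le lt x y -> le lt y z -> le lt x z.
Proof. intros [h|h] h2; [left; eapply lt_le_trans; eauto | subst; auto]. Qed.
Lemma le_not_lt x y : le lt x y -> ~ lt y x.
Proof. intros h h2. apply (irr x). eapply le_lt_trans; eauto. Qed.
Lemma lt_le x y : lt x y -> le lt x y. Proof. left; auto. Qed.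

Lemma wf_min (P : L -> Prop) : (exists x, P x) -> exists m, P m /\ forall y, P y -> ~ lt y m.
Proof.
  intros [x Hx]. apply NNPP; intro Hn.
  assert (H : forall z, ~ P z).
  { intro z. pattern z. apply (well_founded_ind wf). clear z. intros z IH Pz.
    apply Hn. exists z. split; auto. intros y Py Hy. exact (IH y Hy Py). }
  exact (H x Hx).
Qed.

Lemma lsub (f : nat -> L) : (exists u, forall n, lt (f n) u) ->
  exists s, (forall n, lt (f n) s) /\ (forall g, lt g s -> exists n, le lt g (f n))
    /\ (forall y, (forall n, lt (f n) y) -> le lt s y).
Proof.
  intros Hu. destruct (wf_min (fun y => forall n, lt (f n) y) Hu) as [s [Hs Hmin]].
  exists s. split; [auto|split].
  - intros g Hg. apply NNPP; intro Hn. apply (Hmin g); auto.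
    intro n. apply NNPP; intro Hn2. apply Hn. exists n. apply not_lt_le; auto.
  - intros y Hy. apply not_lt_le. intro h. exact (Hmin y Hy h).
Qed.

Lemma itr_inc (F : L -> L) x0 : (forall x, lt x (F x)) ->
  forall m n, (m < n)%nat -> lt (itr F x0 m) (itr F x0 n).
Proof.
  intros HF m n Hmn. induction n as [|n IH]; [lia|].
  simpl. destruct (Nat.eq_dec m n) as [->|Hne]; [apply HF|].
  eapply trans; [apply IH; lia | apply HF].
Qed.

Lemma itr_mono (F : L -> L) x0 : (forall x, lt x (F x)) ->
  forall m n, (m <= n)%nat -> le lt (itr F x0 m) (itr F x0 n).
Proof.
  intros HF m n Hmn. destruct (Nat.eq_dec m n) as [->|Hne]; [apply le_refl|].
  left. apply itr_inc; auto; lia.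
Qed.

Lemma inc_le (k : L -> L) : (forall x y, lt x y -> lt (k x) (k y)) -> forall x, le lt x (k x).
Proof.
  intros Hk x. apply not_lt_le. intro H.
  destruct (wf_min (fun z => lt (k z) z) (ex_intro _ x H)) as [m [Hm Hmin]].
  apply (Hmin (k m)); auto.
Qed.

Lemma is_sup_below_mono (P Q : L -> Prop) b :
  (forall x, P x -> Q x) -> is_sup_below lt P b -> is_sup_below lt Q b.
Proof. intros HPQ H g Hg. destruct (H g Hg) as [a [Ha [h1 h2]]]. exists a; auto. Qed.

Lemma club_ext (A B : L -> Prop) : club lt A -> (forall x, A x <-> B x) -> club lt B.
Proof.
  intros [Hu Hc] Hab. split.
  - intro g. destruct (Hu g) as [d [h1 h2]]. exists d. split; auto. apply Hab; auto.
  - intros b [c [h1 h2]] Hs. apply Hab. apply Hc.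
    + exists c; split; auto; apply Hab; auto.
    + eapply is_sup_below_mono; [|exact Hs]. intros x; apply Hab.
Qed.

Lemma club_True : club lt (fun _ => True).
Proof. split. intro g. exists g. split; auto. apply le_refl. intros; auto. Qed.

Hypothesis Hreg : regular lt.
Hypothesis Hunc : uncountable (L := L).

Lemma no_max : forall x, exists y, lt x y.
Proof.
  intro m. apply NNPP; intro Hn.
  destruct (Hreg (fun y => y = m)) as [f [Hf1 [Hf2 _]]].
  { intro g. exists m. split; auto. apply not_lt_le. intro h. apply Hn. eauto. }
  assert (Hf : forall x, f x = m) by exact Hf2.
  apply Hunc. exists (fun _ => 0). intros x y _.
  destruct (tri x y) as [H|[H|H]]; auto; exfalso; pose proof (Hf1 _ _ H) as H';
    rewrite !Hf in H'; exact (irr _ H').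
Qed.

Lemma omega_bounded (f : nat -> L) : exists u, forall n, lt (f n) u.
Proof.
  apply NNPP; intro Hn.
  destruct (Hreg (fun y => exists n, f n = y)) as [g [Hg1 [Hg2 _]]].
  { intro u. apply NNPP; intro H2. apply Hn. exists u. intro n. apply NNPP; intro H3.
    apply H2. exists (f n). split; [eauto| apply not_lt_le; auto]. }
  destruct (choice_fun (fun x n => f n = g x) Hg2) as [k Hk].
  apply Hunc. exists k. intros x y Hxy.
  destruct (tri x y) as [H|[H|H]]; auto; exfalso; pose proof (Hg1 _ _ H) as H';
    rewrite <- (Hk x), <- (Hk y), Hxy in H'; exact (irr _ H').
Qed.

Lemma bounded_image (d : L) (h : L -> L) :
  (forall a b, lt a b -> lt b d -> le lt (h a) (h b)) ->
  exists u, forall a, lt a d -> le lt (h a) u.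
Proof.
  intro Hmon. apply NNPP; intro Hn.
  destruct (Hreg (fun y => exists a, lt a d /\ h a = y)) as [g [Hg1 [Hg2 _]]].
  { intro u. apply NNPP; intro H2. apply Hn. exists u. intros a Ha. apply NNPP; intro H3.
    apply H2. exists (h a). split; [eauto | left; apply not_le_lt; auto]. }
  destruct (choice_fun (fun x a => lt a d /\ h a = g x) Hg2) as [k Hk].
  assert (Hkinc : forall x y, lt x y -> lt (k x) (k y)).
  { intros x y Hxy. pose proof (Hg1 _ _ Hxy) as Hg.
    destruct (Hk x) as [hx ex]. destruct (Hk y) as [hy ey].
    destruct (tri (k x) (k y)) as [H|[H|H]]; auto; exfalso.
    - rewrite <- ex, <- ey, H in Hg. exact (irr _ Hg).
    - pose proof (Hmon _ _ H hx) as Hm. rewrite ex, ey in Hm. exact (le_not_lt _ _ Hm Hg). }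
  pose proof (inc_le k Hkinc d) as H1. destruct (Hk d) as [H2 _].
  exact (le_not_lt _ _ H1 H2).
Qed.

Lemma tail_club g : club lt (fun x => lt g x).
Proof.
  split.
  - intro h. destruct (no_max g) as [y Hy]. destruct (classic (lt g h)) as [H|H].
    + exists h. split; auto. apply le_refl.
    + exists y. split; auto. left. eapply le_lt_trans; [apply not_lt_le; exact H | exact Hy].
  - intros b [c [h1 h2]] _. eapply trans; eauto.
Qed.

Lemma inter2 (A B : L -> Prop) : club lt A -> club lt B -> club lt (fun x => A x /\ B x).
Proof.
  intros [HuA HcA] [HuB HcB]. split.
  - intro g.
    assert (HA : forall x, exists y, A y /\ lt x y).
    { intro x. destruct (no_max x) as [z Hz]. destruct (HuA z) as [d [h1 h2]].
      exists d. split; auto. eapply lt_le_trans; eauto. }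
    assert (HB : forall x, exists y, B y /\ lt x y).
    { intro x. destruct (no_max x) as [z Hz]. destruct (HuB z) as [d [h1 h2]].
      exists d. split; auto. eapply lt_le_trans; eauto. }
    destruct (choice_fun _ HA) as [fA HfA]. destruct (choice_fun _ HB) as [fB HfB].
    set (a := itr (fun x => fA (fB x)) (fA g)).
    assert (Hinc : forall x, lt x (fA (fB x))).
    { intro x. eapply trans; [apply (HfB x) | apply (HfA (fB x))]. }
    destruct (lsub a (omega_bounded a)) as [s [Hs1 [Hs2 _]]].
    assert (Ha0 : forall n, A (a n)).
    { intro n. destruct n; simpl; apply HfA. }
    exists s. split; [split|].
    + apply HcA. exists (a 0%nat). split; auto.
      intros g' Hg'. destruct (Hs2 g' Hg') as [n Hn]. exists (a (S n)). split; auto.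
      split; [eapply le_lt_trans; [exact Hn | apply (itr_inc _ _ Hinc); lia] | apply Hs1].
    + apply HcB. exists (fB (a 0%nat)). split; [apply HfB|].
      eapply trans; [apply (HfA (fB (a 0%nat))) | apply (Hs1 1%nat)].
      intros g' Hg'. destruct (Hs2 g' Hg') as [n Hn]. exists (fB (a n)). split; [apply HfB|].
      split; [eapply le_lt_trans; [exact Hn | apply HfB] |].
      eapply trans; [apply (HfA (fB (a n))) | apply (Hs1 (S n))].
    + left. eapply trans; [apply (HfA g) | apply (Hs1 0%nat)].
  - intros b [c [[h1 h2] h3]] Hs. split.
    + apply HcA; [exists c; auto|]. eapply is_sup_below_mono; [|exact Hs]. intros x [? ?]; auto.
    + apply HcB; [exists c; auto|]. eapply is_sup_below_mono; [|exact Hs]. intros x [? ?]; auto.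
Qed.


Lemma inter_lt : forall d (K : L -> L -> Prop), (forall c, lt c d -> club lt (K c)) ->
  club lt (fun x => forall c, lt c d -> K c x).
Proof.
  intro d. pattern d. apply (well_founded_ind (wf)). clear d. intros d IH K HK. split.
  - intro g. destruct (classic (exists c0, succ_of lt c0 d)) as [[c0 [Hc0 Hs]]|Hns].
    + assert (HZ : club lt (fun x => forall c, lt c c0 -> K c x)).
      { apply IH; auto. intros c Hc. apply HK. eapply trans; eauto. }
      destruct (inter2 _ _ HZ (HK c0 Hc0)) as [Hu _].
      destruct (Hu g) as [x [[Hx1 Hx2] Hx3]]. exists x. split; auto.
      intros c Hc. destruct (tri c c0) as [h|[h|h]]; [auto| subst; auto | exfalso; apply (Hs c); auto].
    + destruct (classic (exists c0, lt c0 d)) as [[c0 Hc0]|Hnd].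
      2:{ exists g. split; [|apply le_refl]. intros c Hc. exfalso; eauto. }
      assert (Hlim : forall c, lt c d -> exists c', lt c c' /\ lt c' d).
      { intros c Hc. apply NNPP; intro H. apply Hns. exists c. split; auto.
        intros g' [h1 h2]. apply H. eauto. }
      assert (Hh : forall a, exists y, lt a d ->
        (le lt g y /\ forall c, lt c a -> K c y) /\
        forall z, (le lt g z /\ forall c, lt c a -> K c z) -> le lt y z).
      { intro a. destruct (classic (lt a d)) as [Ha|Ha]; [|exists g; intro; contradiction].
        assert (HZ : club lt (fun x => forall c, lt c a -> K c x)).
        { apply IH; auto. intros c Hc. apply HK. eapply trans; eauto. }
        destruct HZ as [Hu _]. destruct (Hu g) as [x [Hx1 Hx2]].
        destruct (wf_min (fun y => le lt g y /\ forall c, lt c a -> K c y)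
          (ex_intro _ x (conj Hx2 Hx1))) as [m [Hm Hmin]].
        exists m. intros _. split; auto. intros z Hz. apply not_lt_le. intro h. exact (Hmin z Hz h). }
      destruct (choice_fun _ Hh) as [h Hhp].
      assert (Hmon : forall a b, lt a b -> lt b d -> le lt (h a) (h b)).
      { intros a b Hab Hbd. destruct (Hhp b Hbd) as [[Hb1 Hb2] _].
        apply (proj2 (Hhp a (trans _ _ _ Hab Hbd))). split; auto.
        intros c Hc. apply Hb2. eapply trans; eauto. }
      destruct (bounded_image d h Hmon) as [u Hu].
      destruct (wf_min (fun y => forall a, lt a d -> le lt (h a) y) (ex_intro _ u Hu))
        as [s [Hs Hsmin]].
      exists s. split.
      * intros c Hc.
        destruct (classic (exists a, lt c a /\ lt a d /\ h a = s)) as [[a [h1 [h2 h3]]]|Hne].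
        { rewrite <- h3. apply (proj2 (proj1 (Hhp a h2))). auto. }
        assert (Hlt : forall a, lt c a -> lt a d -> lt (h a) s).
        { intros a h1 h2. destruct (Hs a h2) as [e|e]; auto. exfalso. apply Hne. eauto. }
        destruct (Hlim c Hc) as [a [Ha1 Ha2]].
        destruct (HK c Hc) as [_ Hcl]. apply Hcl.
        { exists (h a). split; [apply (proj2 (proj1 (Hhp a Ha2))); auto | auto]. }
        intros g' Hg'.
        assert (Hex : exists a', lt a' d /\ lt g' (h a')).
        { apply NNPP; intro Hn. apply (Hsmin g'); auto. intros a' Ha'.
          apply not_lt_le. intro hh. apply Hn. eauto. }
        destruct Hex as [a' [Ha'1 Ha'2]].
        destruct (tri a a') as [t|[t|t]].
        { exists (h a'). split; [apply (proj2 (proj1 (Hhp a' Ha'1))); eapply trans; eauto|].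
          split; auto. apply Hlt; auto. eapply trans; eauto. }
        { subst a'. exists (h a). split; [apply (proj2 (proj1 (Hhp a Ha2))); auto|]. split; auto. }
        { exists (h a). split; [apply (proj2 (proj1 (Hhp a Ha2))); auto|]. split; auto.
          eapply lt_le_trans; [exact Ha'2| apply Hmon; auto]. }
      * eapply le_trans; [apply (proj1 (proj1 (Hhp c0 Hc0)))| apply Hs; auto].
  - intros b [x [Hx1 Hx2]] Hs c Hc. destruct (HK c Hc) as [_ Hcl]. apply Hcl.
    + exists x; auto.
    + eapply is_sup_below_mono; [|exact Hs]. intros y Hy; auto.
Qed.

Lemma diag (K : L -> L -> Prop) : (forall c, club lt (K c)) ->
  club lt (fun x => forall c, lt c x -> K c x).
Proof.
  intro HK. split.
  - intro g.
    assert (HF : forall x, exists y, lt x y /\ forall c, le lt c x -> K c y).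
    { intro x. destruct (no_max x) as [z Hz].
      destruct (inter_lt z K (fun c _ => HK c)) as [Hu _].
      destruct (Hu z) as [y [Hy1 Hy2]]. exists y. split; [eapply lt_le_trans; eauto|].
      intros c Hc. apply Hy1. eapply le_lt_trans; eauto. }
    destruct (choice_fun _ HF) as [F HFp].
    set (a := itr F g).
    assert (Hinc : forall x, lt x (F x)) by (intro; apply HFp).
    destruct (lsub a (omega_bounded a)) as [s [Hs1 [Hs2 _]]].
    exists s. split.
    + intros c Hc. destruct (Hs2 c Hc) as [n Hn].
      assert (HKa : forall m, (n <= m)%nat -> K c (a (S m))).
      { intros m Hm. simpl. apply HFp. eapply le_trans; [exact Hn|]. apply itr_mono; auto. }
      destruct (HK c) as [_ Hcl]. apply Hcl.
      * exists (a (S n)). split; auto.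
      * intros g' Hg'. destruct (Hs2 g' Hg') as [m Hm]. exists (a (S (Nat.max n m))).
        split; [apply HKa; lia|]. split; auto.
        eapply le_lt_trans; [exact Hm|]. apply itr_inc; auto. lia.
    + left. apply (Hs1 0%nat).
  - intros b [x [Hx1 Hx2]] Hs c Hc. destruct (HK c) as [_ Hcl]. apply Hcl.
    + destruct (Hs c Hc) as [y [Hy1 [Hy2 Hy3]]]. exists y. split; auto.
    + intros g' Hg'.
      destruct (classic (lt g' c)) as [h|h].
      * destruct (Hs c Hc) as [y [Hy1 [Hy2 Hy3]]]. exists y. split; auto. split; auto. eapply trans; eauto.
      * destruct (Hs g' Hg') as [y [Hy1 [Hy2 Hy3]]]. exists y. split; auto.
        apply Hy1. eapply le_lt_trans; [apply not_lt_le; exact h| exact Hy2].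
Qed.

Lemma not_stat (T : L -> Prop) : ~ stationary lt T -> exists C, club lt C /\ forall x, C x -> ~ T x.
Proof.
  intro H. apply NNPP; intro Hn. apply H. intros C HC. apply NNPP; intro H2.
  apply Hn. exists C. split; auto. intros x Cx Tx. apply H2. eauto.
Qed.

Lemma stat_club_above (T K : L -> Prop) : stationary lt T -> club lt K ->
  forall b, exists a, T a /\ K a /\ lt b a.
Proof.
  intros HT HK b. destruct (HT _ (inter2 _ _ HK (tail_club b))) as [x [[h1 h2] h3]]. eauto.
Qed.

Lemma stat_tail (T : L -> Prop) b : stationary lt T -> stationary lt (fun a => T a /\ lt b a).
Proof.
  intros HT C HC. destruct (HT _ (inter2 _ _ HC (tail_club b))) as [x [[h1 h2] h3]]. eauto.
Qed.

Lemma stat_split (T Q : L -> Prop) : stationary lt T ->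
  stationary lt (fun a => T a /\ Q a) \/ stationary lt (fun a => T a /\ ~ Q a).
Proof.
  intro HT. apply NNPP; intro Hn. apply not_or_and in Hn. destruct Hn as [H1 H2].
  destruct (not_stat _ H1) as [C1 [HC1 H1']]. destruct (not_stat _ H2) as [C2 [HC2 H2']].
  destruct (HT _ (inter2 _ _ HC1 HC2)) as [x [[h1 h2] h3]].
  destruct (classic (Q x)); [apply (H1' x)|apply (H2' x)]; auto.
Qed.

Lemma ctbl_union (S : L -> Prop) (P : nat -> L -> Prop) : stationary lt S ->
  (forall x, S x -> exists n, P n x) -> exists n, stationary lt (fun x => S x /\ P n x).
Proof.
  intros HS HP. apply NNPP; intro Hn.
  assert (HK : forall n, exists C, club lt C /\ forall x, C x -> ~ (S x /\ P n x)).
  { intro n. apply not_stat. intro h. apply Hn. eauto. }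
  destruct (choice_fun _ HK) as [Kn HKn].
  destruct (HS _ club_True) as [x0 _].
  destruct (choice_fun _ no_max) as [nm Hnm].
  set (e := itr nm x0).
  assert (Hinj : forall m n, e m = e n -> m = n).
  { intros m n Hmn. destruct (Nat.lt_trichotomy m n) as [h|[h|h]]; auto; exfalso.
    - pose proof (itr_inc nm x0 Hnm m n h) as H. fold e in H. rewrite Hmn in H. exact (irr _ H).
    - pose proof (itr_inc nm x0 Hnm n m h) as H. fold e in H. rewrite Hmn in H. exact (irr _ H). }
  destruct (omega_bounded e) as [u Hu].
  set (K' := fun c x => forall n, e n = c -> Kn n x).
  assert (HK' : forall c, club lt (K' c)).
  { intro c. destruct (classic (exists n, e n = c)) as [[n0 Hn0]|Hno].
    - apply (club_ext (Kn n0)); [apply HKn|]. intro x. unfold K'. split.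
      + intros h n Hn'. rewrite <- Hn0 in Hn'. apply Hinj in Hn'. subst; auto.
      + intro h. apply h; auto.
    - apply (club_ext (fun _ => True)); [apply club_True|]. intro x. unfold K'. split; auto.
      intros _ n Hn'. exfalso; eauto. }
  destruct (HS _ (inter_lt u K' (fun c _ => HK' c))) as [x [Hx HSx]].
  destruct (HP x HSx) as [n Hpn].
  apply (proj2 (HKn n) x); auto. apply (Hx (e n) (Hu n)). reflexivity.
Qed.


Lemma acc_club (b : L) (C : L -> Prop) : cf_gt_omega lt b -> club_in lt b C ->
  club_in lt b (fun a => acc lt C a /\ lt a b).
Proof.
  intros [_ Hcf] [Hb [Hu Hcl]]. split; [|split].
  - intros x [_ h]; auto.
  - intros g Hg.
    assert (Hstep : forall x, exists y, lt x b -> C y /\ lt x y /\ lt y b).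
    { intro x. destruct (classic (lt x b)) as [Hx|Hx]; [|exists x; intro; contradiction].
      destruct (Hcf (fun _ => x) (fun _ => Hx)) as [h [Hh1 Hh2]].
      destruct (Hu h Hh1) as [d [Hd1 Hd2]]. exists d. intros _. split; auto.
      split; [eapply lt_le_trans; [apply (Hh2 0%nat)| exact Hd2] | auto]. }
    destruct (choice_fun _ Hstep) as [F HF].
    destruct (Hu g Hg) as [c0 [Hc01 Hc02]].
    set (a := itr F c0).
    assert (Ha : forall n, C (a n) /\ lt (a n) b).
    { intro n. induction n as [|n IH]; simpl.
      - split; auto.
      - destruct IH as [_ IH]. destruct (HF _ IH) as [h1 [h2 h3]]. split; auto. }
    assert (Hinc : forall n, lt (a n) (a (S n))).
    { intro n. simpl. apply (HF _ (proj2 (Ha n))). }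
    destruct (Hcf a (fun n => proj2 (Ha n))) as [u [Hu1 Hu2]].
    destruct (lsub a (ex_intro _ u Hu2)) as [s [Hs1 [Hs2 Hs3]]].
    assert (Hsb : lt s b) by (eapply le_lt_trans; [apply Hs3; exact Hu2| exact Hu1]).
    exists s. split; [split; [split|] |].
    + destruct (Hu s Hsb) as [d [h1 h2]]. eauto.
    + intros g' Hg'. destruct (Hs2 g' Hg') as [n Hn]. exists (a (S n)).
      split; [apply Ha|]. split; [eapply le_lt_trans; eauto | apply Hs1].
    + auto.
    + left. eapply le_lt_trans; [exact Hc02 | apply (Hs1 0%nat)].
  - intros b' Hb' [c [[[_ Hc1] Hc2] Hc3]] Hs. split; auto. split.
    + destruct (Hu b' Hb') as [d [h1 h2]]. eauto.
    + intros g Hg. destruct (Hs g Hg) as [a0 [[[_ Ha1] _] [Ha2 Ha3]]].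
      destruct (Ha1 g Ha2) as [c' [h1 [h2 h3]]]. exists c'. split; auto. split; auto.
      eapply trans; eauto.
Qed.

Lemma make_thread (Cs : L -> list (L -> Prop)) (HCs : coherent_fin lt Cs) (T : L -> Prop)
  (E : L -> L -> Prop) : stationary lt T -> (forall a, T a -> In (E a) (Cs a)) ->
  (forall c, ~ (stationary lt (fun a => T a /\ lt c a /\ E a c) /\
                stationary lt (fun a => T a /\ lt c a /\ ~ E a c))) ->
  exists D, thread lt Cs D.
Proof.
  intros HT HE Hno. destruct HCs as [_ [Hcl [_ Hcoh]]].
  set (D := fun c => ~ stationary lt (fun a => T a /\ lt c a /\ ~ E a c)).
  assert (HK : forall c, exists K, club lt K /\
     forall a, K a -> T a -> lt c a -> (E a c <-> D c)).
  { intro c. destruct (classic (D c)) as [Hd|Hd].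
    - destruct (not_stat _ Hd) as [C [HC HC']]. exists C. split; auto.
      intros a Ka Ta ca. split; auto. intros _. apply NNPP. intro h. apply (HC' a); auto.
    - assert (HB : stationary lt (fun a => T a /\ lt c a /\ ~ E a c)) by (apply NNPP; exact Hd).
      assert (HA : ~ stationary lt (fun a => T a /\ lt c a /\ E a c)) by (intro h; apply (Hno c); auto).
      destruct (not_stat _ HA) as [C [HC HC']]. exists C. split; auto.
      intros a Ka Ta ca. split; [intro h; exfalso; apply (HC' a); auto | intro; contradiction]. }
  destruct (choice_fun _ HK) as [K HKp].
  assert (HDel := diag K (fun c => proj1 (HKp c))).
  set (Del := fun x => forall c, lt c x -> K c x) in HDel.
  assert (Key : forall a, T a -> Del a -> forall x, E a x <-> (D x /\ lt x a)).
  { intros a Ta Da x. destruct (Hcl a (E a) (HE a Ta)) as [Hb _]. split.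
    - intro h. assert (xa : lt x a) by auto. split; auto.
      apply (proj2 (HKp x) a (Da x xa) Ta xa). auto.
    - intros [h1 h2]. apply (proj2 (HKp x) a (Da x h2) Ta h2). auto. }
  exists D. split; [split|].
  - intro g. destruct (stat_club_above _ _ HT HDel g) as [a [Ta [Da ga]]].
    destruct (Hcl a (E a) (HE a Ta)) as [_ [Hu _]].
    destruct (Hu g ga) as [d [h1 h2]]. exists d. split; auto. apply (proj1 (Key a Ta Da d) h1).
  - intros b [c [Dc cb]] Hs. destruct (stat_club_above _ _ HT HDel b) as [a [Ta [Da ba]]].
    destruct (Hcl a (E a) (HE a Ta)) as [_ [_ Hc]].
    assert (HEb : E a b).
    { apply Hc; auto.
      - exists c. split; auto. apply Key; auto. split; auto. eapply trans; eauto.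
      - intros g Hg. destruct (Hs g Hg) as [d [h1 [h2 h3]]]. exists d. split; auto.
        apply Key; auto. split; auto. eapply trans; eauto. }
    apply (proj1 (Key a Ta Da b) HEb).
  - intros bb [[d [Dd bd]] Hs]. destruct (stat_club_above _ _ HT HDel d) as [a [Ta [Da da]]].
    assert (bba : lt bb a) by (eapply le_lt_trans; eauto).
    assert (Hacc : acc lt (E a) bb).
    { split.
      - exists d. split; auto. apply Key; auto.
      - intros g Hg. destruct (Hs g Hg) as [x [h1 [h2 h3]]]. exists x. split; auto.
        apply Key; auto. split; auto. eapply trans; eauto. }
    destruct (Hcoh a (E a) (HE a Ta) bb Hacc) as [D' [HD'1 HD'2]].
    exists D'. split; auto. intro x. rewrite HD'2. rewrite (Key a Ta Da x). split.
    + intros [[h1 h2] h3]; auto.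
    + intros [h1 h2]. split; auto. split; auto. eapply trans; eauto.
Qed.

Definition Ej (Cs : L -> list (L -> Prop)) (j : nat) (a : L) : L -> Prop :=
  nth j (Cs a) (nth 0 (Cs a) (fun _ => False)).

Lemma Ej_In Cs j a : Cs a <> [] -> In (Ej Cs j a) (Cs a).
Proof.
  intro H. unfold Ej. destruct (lt_dec j (length (Cs a))) as [h|h].
  - apply nth_In; auto.
  - rewrite nth_overflow by lia. destruct (Cs a); [contradiction| left; reflexivity].
Qed.

Definition sep Cs j1 j2 (T1 T2 : L -> Prop) : Prop :=
  exists c, forall a1 a2, T1 a1 -> T2 a2 -> lt c a1 /\ lt c a2 /\ ~ (Ej Cs j1 a1 c <-> Ej Cs j2 a2 c).

Lemma sep_mono Cs j1 j2 T1 T2 T1' T2' : sep Cs j1 j2 T1 T2 ->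
  (forall x, T1' x -> T1 x) -> (forall x, T2' x -> T2 x) -> sep Cs j1 j2 T1' T2'.
Proof. intros [c Hc] h1 h2. exists c. intros a1 a2 H1 H2. apply Hc; auto. Qed.

Lemma step Cs (HCs : coherent_fin lt Cs) (Hnt : ~ exists D, thread lt Cs D) j1 j2 T1 T2 :
  stationary lt T1 -> stationary lt T2 ->
  exists T1' T2', stationary lt T1' /\ stationary lt T2' /\ (forall x, T1' x -> T1 x) /\
    (forall x, T2' x -> T2 x) /\ sep Cs j1 j2 T1' T2'.
Proof.
  intros H1 H2. apply NNPP; intro Hn. apply Hnt.
  apply (make_thread Cs HCs T1 (Ej Cs j1) H1).
  { intros a _. apply Ej_In. apply (proj1 HCs). }
  intros c [HA HB].
  destruct (stat_split _ (fun a => Ej Cs j2 a c) (stat_tail T2 c H2)) as [H|H].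
  - apply Hn. exists (fun a => T1 a /\ lt c a /\ ~ Ej Cs j1 a c),
      (fun a => (T2 a /\ lt c a) /\ Ej Cs j2 a c).
    split; auto. split; auto. split; [intros x [? _]; auto|]. split; [intros x [[? _] _]; auto|].
    exists c. intros a1 a2 [h1 [h2 h3]] [[h4 h5] h6]. split; auto. split; auto.
    intro hh. apply h3. apply hh. auto.
  - apply Hn. exists (fun a => T1 a /\ lt c a /\ Ej Cs j1 a c),
      (fun a => (T2 a /\ lt c a) /\ ~ Ej Cs j2 a c).
    split; auto. split; auto. split; [intros x [? _]; auto|]. split; [intros x [[? _] _]; auto|].
    exists c. intros a1 a2 [h1 [h2 h3]] [[h4 h5] h6]. split; auto. split; auto.
    intro hh. apply h6. apply hh. auto.
Qed.

Lemma iterate Cs (HCs : coherent_fin lt Cs) (Hnt : ~ exists D, thread lt Cs D)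
  (ps : list (nat * nat)) : forall T1 T2, stationary lt T1 -> stationary lt T2 ->
  exists T1' T2', stationary lt T1' /\ stationary lt T2' /\ (forall x, T1' x -> T1 x) /\
    (forall x, T2' x -> T2 x) /\ forall p, In p ps -> sep Cs (fst p) (snd p) T1' T2'.
Proof.
  induction ps as [|p ps IH]; intros T1 T2 H1 H2.
  - exists T1, T2. repeat split; auto. intros p [].
  - destruct (IH T1 T2 H1 H2) as [A1 [A2 [HA1 [HA2 [s1 [s2 Hs]]]]]].
    destruct (step Cs HCs Hnt (fst p) (snd p) A1 A2 HA1 HA2) as [B1 [B2 [HB1 [HB2 [t1 [t2 Ht]]]]]].
    exists B1, B2. split; auto. split; auto. split; [intros; auto|]. split; [intros; auto|].
    intros q [<-|Hq]; auto. eapply sep_mono; eauto.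
Qed.

End Main.

Theorem theorem2p6 (L : Type) (lt : L -> L -> Prop)
  (Hwo : wellorder lt) (Hreg : regular lt) (Hunc : uncountable (L := L))
  (Hsq : square_fin lt) :
  forall S : L -> Prop, stationary lt S ->
    exists S1 S2 : L -> Prop,
      (forall x, S1 x -> S x) /\ (forall x, S2 x -> S x) /\
      stationary lt S1 /\ stationary lt S2 /\
      ~ (exists a, reflects_at lt S1 a /\ reflects_at lt S2 a).
Proof.
  intros S HS. destruct Hsq as [Cs [HCs Hnt]].
  destruct (ctbl_union L lt Hwo Hreg Hunc S (fun n x => (length (Cs x) <= n)%nat) HS) as [n Hn].
  { intros x _. exists (length (Cs x)). lia. }
  destruct (iterate L lt Hwo Hreg Hunc Cs HCs Hnt (list_prod (seq 0 n) (seq 0 n)) _ _ Hn Hn)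
    as [T1 [T2 [H1 [H2 [H1s [H2s Hsep]]]]]].
  exists T1, T2. split; [intros x h; apply (H1s x h)|]. split; [intros x h; apply (H2s x h)|].
  split; auto. split; auto.
  intros [bb [[Hcf1 Hst1] [Hcf2 Hst2]]].
  destruct HCs as [Hne [Hcl [Hsc Hcoh]]].
  assert (HC : exists C, In C (Cs bb)).
  { destruct (Cs bb) as [|C l] eqn:E; [exfalso; apply (Hne bb E)| exists C; left; auto]. }
  destruct HC as [C HC].
  pose proof (acc_club L lt Hwo bb C Hcf1 (Hcl bb C HC)) as Hac.
  destruct (Hst1 _ Hac) as [x1 [[Hx1a _] [Tx1 _]]].
  destruct (Hst2 _ Hac) as [x2 [[Hx2a _] [Tx2 _]]].
  destruct (Hcoh bb C HC x1 Hx1a) as [D1 [HD1 HD1e]].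
  destruct (Hcoh bb C HC x2 Hx2a) as [D2 [HD2 HD2e]].
  destruct (In_nth _ _ (nth 0 (Cs x1) (fun _ => False)) HD1) as [j1 [Hj1 Ej1]].
  destruct (In_nth _ _ (nth 0 (Cs x2) (fun _ => False)) HD2) as [j2 [Hj2 Ej2]].
  assert (Hl1 := proj2 (H1s x1 Tx1)). assert (Hl2 := proj2 (H2s x2 Tx2)). simpl in Hl1, Hl2.
  assert (Hin : In (j1, j2) (list_prod (seq 0 n) (seq 0 n))).
  { apply in_prod; apply in_seq; lia. }
  destruct (Hsep _ Hin) as [c Hc]. simpl in Hc.
  destruct (Hc x1 x2 Tx1 Tx2) as [c1 [c2 Hneq]]. apply Hneq.
  unfold Ej. rewrite Ej1, Ej2. rewrite HD1e, HD2e. tauto.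
Qed.
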